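(* Let $B$ be a finite set of Boolean functions and let $B^d=\{f^d: f\in B\}$. Then for each $X\in\{F,C\}$ and $Y\in\{l,s\}$, $\mathrm{MEE}^{X}_{Y}(B)\equiv_m^{\log}\mathrm{MEE}^{X}_{Y}(B^d)$ (equivalence under logspace many-one reductions).
   Context: A Boolean function is a map $f\colon\{0,1\}^n\to\{0,1\}$. For $n$-ary $f$, $f^d(x_1,\dots,x_n)=\overline{f(\overline{x_1},\dots,\overline{x_n})}$. For a finite set $B$ of Boolean functions, $B$-formulas: every variable is one, and $f(\varphi_1,\dots,\varphi_n)$ is one for $f\in B$ $n$-ary and $B$-formulas $\varphi_i$; $B$-circuits are the DAG analogue with non-input gates labeled by functions of $B$. Equivalence $\equiv$ means equal value under all assignments. $\mathrm{size}_l$ counts variable occurrences (input gates), $\mathrm{size}_s$ counts function symbols (non-input gates). $\mathrm{MEE}^{F}_{Y}(B)$ (resp. $\mathrm{MEE}^{C}_{Y}(B)$): given a $B$-formula (resp. $B$-circuit) $\varphi$ and a natural number $k$, is there a $B$-formula (resp. $B$-circuit) $\psi$ with $\mathrm{size}_Y(\psi)\le k$ and $\psi\equiv\varphi$? *)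

(* Defs.v *)
From mathcomp Require Import all_boot.
Set Implicit Arguments. Unset Strict Implicit. Unset Printing Implicit Defensive.

Definition bfun := {n : nat & {ffun n.-tuple bool -> bool}}.

Definition arity (f : bfun) : nat := tag f.

(* Application of f to a list of argument values (false if arity mismatch;
   only used on well-formed objects, where the arity always matches). *)
Definition bapp (f : bfun) (vs : seq bool) : bool :=
  match (insub vs : option ((tag f).-tuple bool)) with
  | Some t => tagged f t
  | None => false
  end.

Definition dual (f : bfun) : bfun :=
  existT (fun n => {ffun n.-tuple bool -> bool}) (tag f)
    [ffun t : (tag f).-tuple bool => ~~ tagged f (map_tuple negb t)].

Definition dualset (B : seq bfun) : seq bfun := map dual B.

Definition assignment := nat -> bool.

Inductive form : Type :=
| Var : nat -> form
| App : bfun -> seq form -> form.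

Fixpoint feval (a : assignment) (phi : form) : bool :=
  match phi with
  | Var i => a i
  | App f args => bapp f (map (feval a) args)
  end.

Fixpoint is_Bformula (B : seq bfun) (phi : form) : bool :=
  match phi with
  | Var _ => true
  | App f args => [&& f \in B, size args == arity f & all (is_Bformula B) args]
  end.

Fixpoint fsize_l (phi : form) : nat :=
  match phi with
  | Var _ => 1
  | App _ args => sumn (map fsize_l args)
  end.

Fixpoint fsize_s (phi : form) : nat :=
  match phi with
  | Var _ => 0
  | App _ args => (sumn (map fsize_s args)).+1
  end.

Definition fequiv (psi phi : form) : Prop := forall a : assignment, feval a psi = feval a phi.

(* A circuit is a nonempty list of gates in topological order; gate i is
   either an input gate labelled by a variable, or a gate labelled by a
   function f whose inputs are (indices of) earlier gates. The last gate
   is the output gate. *)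
Inductive gate : Type :=
| In : nat -> gate
| Gt : bfun -> seq nat -> gate.

Definition circuit := seq gate.

Definition gate_val (a : assignment) (vs : seq bool) (g : gate) : bool :=
  match g with
  | In j => a j
  | Gt f ins => bapp f (map (nth false vs) ins)
  end.

Definition cvals (a : assignment) (c : circuit) : seq bool :=
  foldl (fun vs g => rcons vs (gate_val a vs g)) [::] c.

Definition ceval (a : assignment) (c : circuit) : bool := last false (cvals a c).

Definition gate_ok (B : seq bfun) (i : nat) (g : gate) : bool :=
  match g with
  | In _ => true
  | Gt f ins => [&& f \in B, size ins == arity f & all (fun j => j < i) ins]
  end.

Definition is_Bcircuit (B : seq bfun) (c : circuit) : bool :=
  (0 < size c) && all (fun i => gate_ok B i (nth (In 0) c i)) (iota 0 (size c)).

Definition is_input (g : gate) : bool := if g is In _ then true else false.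

Definition csize_l (c : circuit) : nat := count is_input c.
Definition csize_s (c : circuit) : nat := count (predC is_input) c.

Definition cequiv (psi phi : circuit) : Prop := forall a : assignment, ceval a psi = ceval a phi.

Inductive token := T0 | T1 | Tx | Tf | Tlp | Trp | Tcomma | Thash.

Definition tok_bits (t : token) : seq bool :=
  match t with
  | T0 => [:: false; false; false]
  | T1 => [:: false; false; true]
  | Tx => [:: false; true; false]
  | Tf => [:: false; true; true]
  | Tlp => [:: true; false; false]
  | Trp => [:: true; false; true]
  | Tcomma => [:: true; true; false]
  | Thash => [:: true; true; true]
  end.

Definition to_bits (ts : seq token) : seq bool := flatten (map tok_bits ts).

Definition bit_tok (b : bool) : token := if b then T1 else T0.

(* binary representation, most significant bit first; bin 0 = "0" *)
Fixpoint binrev (fuel n : nat) : seq bool :=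
  match fuel with
  | 0 => [::]
  | fuel'.+1 => if n is 0 then [::] else odd n :: binrev fuel' n./2
  end.

Definition bin (n : nat) : seq token :=
  if n == 0 then [:: T0] else map bit_tok (rev (binrev n n)).

Definition enc_fun (f : bfun) : seq token :=
  bin (arity f) ++ Thash :: map bit_tok (fgraph (tagged f)).

Fixpoint sep_by (s : seq (seq token)) : seq token :=
  match s with
  | [::] => [::]
  | [:: x] => x
  | x :: s' => x ++ Tcomma :: sep_by s'
  end.

Fixpoint enc_form (phi : form) : seq token :=
  match phi with
  | Var i => Tx :: bin i
  | App f args => Tf :: enc_fun f ++ Tlp :: sep_by (map enc_form args) ++ [:: Trp]
  end.

Definition enc_gate (g : gate) : seq token :=
  match g with
  | In j => Tx :: bin j
  | Gt f ins => Tf :: enc_fun f ++ Tlp :: sep_by (map bin ins) ++ [:: Trp]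
  end.

Definition enc_circuit (c : circuit) : seq token := flatten (map enc_gate c).

Inductive kindX := XF | XC.
Inductive kindY := Yl | Ys.

Definition fsize (Y : kindY) := match Y with Yl => fsize_l | Ys => fsize_s end.
Definition csize (Y : kindY) := match Y with Yl => csize_l | Ys => csize_s end.

Definition MEE (X : kindX) (Y : kindY) (B : seq bfun) (s : seq bool) : Prop :=
  match X with
  | XF => exists (phi : form) (k : nat),
      s = to_bits (enc_form phi ++ Thash :: bin k) /\ is_Bformula B phi /\
      exists psi : form, is_Bformula B psi /\ fsize Y psi <= k /\ fequiv psi phi
  | XC => exists (phi : circuit) (k : nat),
      s = to_bits (enc_circuit phi ++ Thash :: bin k) /\ is_Bcircuit B phi /\
      exists psi : circuit, is_Bcircuit B psi /\ csize Y psi <= k /\ cequiv psi phi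
  end.

(* Deterministic machine with a two-way read-only input tape with end
   markers, one work tape over {0,1,blank}, and a one-way write-only output
   tape over {0,1}. *)
Inductive move := ML | MS | MR.

Record LTM := {
  Q : finType;
  q0 : Q;
  halting : pred Q;
  (* state, input symbol (None = end marker), work symbol (None = blank) ->
     new state, input move, symbol written on work tape, work move,
     optional output bit *)
  delta : Q -> option bool -> option bool ->
          Q * move * option bool * move * option bool
}.

Record config (M : LTM) := Config {
  st : Q M;
  ihead : nat;                (* 0 = left marker, 1..n = input, n+1 = right marker *)
  wtape : nat -> option bool;
  whead : nat;
  out : seq bool
}.

Definition read_input (x : seq bool) (i : nat) : option bool :=
  if (0 < i) && (i <= size x) then Some (nth false x i.-1) else None.

Definition move_in (n : nat) (m : move) (i : nat) : nat :=
  match m with ML => i.-1 | MS => i | MR => minn i.+1 n.+1 end.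

Definition move_w (m : move) (i : nat) : nat :=
  match m with ML => i.-1 | MS => i | MR => i.+1 end.

Definition step (M : LTM) (x : seq bool) (c : config M) : config M :=
  if @halting M (st c) then c else
  let: (q', mi, w, mw, o) :=
     @delta M (st c) (read_input x (ihead c)) (wtape c (whead c)) in
  @Config M q' (move_in (size x) mi (ihead c))
    (fun j => if j == whead c then w else wtape c j)
    (move_w mw (whead c))
    (if o is Some b then rcons (out c) b else out c).

Definition init_config (M : LTM) : config M :=
  @Config M (@q0 M) 0 (fun _ => None) 0 [::].

Definition run (M : LTM) (x : seq bool) (t : nat) : config M :=
  iter t (@step M x) (init_config M).

Definition logspace_computable (f : seq bool -> seq bool) : Prop :=
  exists (M : LTM) (c : nat), forall x : seq bool, exists t : nat,
    @halting M (st (run M x t)) /\ out (run M x t) = f x /\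
    forall s, s <= t -> whead (run M x s) <= c * trunc_log 2 (size x).+2 + c.

Definition logspace_reducible (A B : seq bool -> Prop) : Prop :=
  exists f, logspace_computable f /\ forall x, A x <-> B (f x).

Definition logspace_equiv (A B : seq bool -> Prop) : Prop :=
  logspace_reducible A B /\ logspace_reducible B A.

(* Main.v *)
From HB Require Import structures.
Require Import Defs.
From mathcomp Require Import all_boot zify.
Set Implicit Arguments. Unset Strict Implicit. Unset Printing Implicit Defensive.

Section Gen.
Variables (R : choiceType) (s0 : R) (tr : R -> bool -> R * seq bool)
  (fin : R -> seq bool) (reach : seq R).
Hypothesis Hs0 : s0 \in reach.
Hypothesis Hcl : forall r b, r \in reach -> (tr r b).1 \in reach.

Fixpoint RunG (r : R) (x : seq bool) : seq bool :=
  match x with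
  | [::] => fin r
  | b :: x' => (tr r b).2 ++ RunG (tr r b).1 x'
  end.

Definition SR := seq_sub reach.
Definition KK := \max_(r <- reach)
   (maxn (size (tr r true).2) (maxn (size (tr r false).2) (size (fin r)))).

Lemma KK_tr (sr : SR) b : size (tr (ssval sr) b).2 <= KK.
Proof.
rewrite /KK; have H := ssvalP sr.
apply: (leq_trans _ (leq_bigmax_seq _ H _)) => //.
by case: b; rewrite ?leq_maxl // (leq_trans _ (leq_maxr _ _)) // leq_maxl.
Qed.

Lemma KK_fin (sr : SR) : size (fin (ssval sr)) <= KK.
Proof.
rewrite /KK; have H := ssvalP sr.
apply: (leq_trans _ (leq_bigmax_seq _ H _)) => //.
by rewrite (leq_trans _ (leq_maxr _ _)) // leq_maxr.
Qed.

Definition QQ : finType := ((unit + SR) + ((SR * bool * 'I_KK.+1) + ((SR * 'I_KK.+1) + unit)))%type.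

Definition qStart : QQ := inl (inl tt).
Definition qRead sr : QQ := inl (inr sr).
Definition qEmit sr b j : QQ := inr (inl (sr, b, j)).
Definition qFin sr j : QQ := inr (inr (inl (sr, j))).
Definition qDone : QQ := inr (inr (inr tt)).

Definition sr0 : SR := SeqSub Hs0.

Definition dlt (q : QQ) (i : option bool) (w : option bool) :
  QQ * move * option bool * move * option bool :=
  match q with
  | inl (inl _) => (qRead sr0, MR, None, MS, None)
  | inl (inr sr) => match i with
                    | Some b => (qEmit sr b ord0, MS, None, MS, None)
                    | None => (qFin sr ord0, MS, None, MS, None)
                    end
  | inr (inl (sr, b, j)) =>
      let w := (tr (ssval sr) b).2 in
      if j < size w then (qEmit sr b (inord j.+1), MS, None, MS, Some (nth false w j))
      else (qRead (insubd sr (tr (ssval sr) b).1), MR, None, MS, None)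
  | inr (inr (inl (sr, j))) =>
      let w := fin (ssval sr) in
      if j < size w then (qFin sr (inord j.+1), MS, None, MS, Some (nth false w j))
      else (qDone, MS, None, MS, None)
  | inr (inr (inr _)) => (qDone, MS, None, MS, None)
  end.

Definition MM : LTM := {| Q := QQ; q0 := qStart; halting := fun q => q == qDone; delta := dlt |}.

Variable x : seq bool.

Lemma dlt_mw (q : QQ) i w : (@delta MM q i w).1.2 = MS.
Proof.
case: q => [[[]|sr]|[[[sr b] j]|[[sr j]|[]]]] //=; first by case: i.
  by case: ifP.
by case: ifP.
Qed.

Lemma step_whead (c : config MM) : whead c = 0 -> whead (step x c) = 0.
Proof.
move=> H; rewrite /step; case: ifP => // _.
have := dlt_mw (st c) (read_input x (ihead c)) (wtape c (whead c)).
case: (@delta MM _ _ _) => [[[[q' mi] w'] mw] o] /= ->; by rewrite H.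
Qed.

Lemma run_whead t : whead (run MM x t) = 0.
Proof. by elim: t => //= t IH; apply: step_whead. Qed.

Lemma step_st (c : config MM) : st c != qDone ->
  let D := @delta MM (st c) (read_input x (ihead c)) (wtape c (whead c)) in
  [/\ st (step x c) = D.1.1.1.1, ihead (step x c) = move_in (size x) D.1.1.1.2 (ihead c)
    & out (step x c) = if D.2 is Some b then rcons (out c) b else out c].
Proof.
move=> H; rewrite /step.
have -> : @halting MM (st c) = false by apply: negbTE.
by case: (@delta MM _ _ _) => [[[[q' mi] w'] mw] o]; split.
Qed.


Lemma fin_lem k : forall (sr : SR) (j : 'I_KK.+1) (c : config MM),
  st c = qFin sr j -> size (fin (ssval sr)) - j = k ->
  exists t, st (iter t (step x) c) = qDone /\
            out (iter t (step x) c) = out c ++ drop j (fin (ssval sr)).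
Proof.
elim: k => [|k IH] sr j c Hst Hk.
  have [Hs _ Ho] := step_st (c:=c) ltac:(by rewrite Hst).
  rewrite Hst /= in Hs Ho.
  have Hj : j < size (fin (ssval sr)) = false by apply/negbTE; rewrite -leqNgt -subn_eq0 Hk.
  rewrite Hj in Hs Ho.
  exists 1; split => //; rewrite Ho drop_oversize ?cats0 //.
  by rewrite leqNgt Hj.
have [Hs _ Ho] := step_st (c:=c) ltac:(by rewrite Hst).
rewrite Hst /= in Hs Ho.
have Hj : j < size (fin (ssval sr)) by rewrite -subn_gt0 Hk.
rewrite Hj in Hs Ho.
have Hj1 : j.+1 < KK.+1 by rewrite ltnS (leq_trans Hj) // KK_fin.
have [t [Ht1 Ht2]] := IH sr (inord j.+1) (step x c) Hs
   ltac:(by rewrite inordK // subnS Hk).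
exists t.+1; rewrite iterSr; split => //.
by rewrite Ht2 Ho inordK // (drop_nth false Hj) cat_rcons.
Qed.

Lemma emit_lem k : forall (sr : SR) b (j : 'I_KK.+1) (c : config MM),
  st c = qEmit sr b j -> size (tr (ssval sr) b).2 - j = k ->
  exists t, st (iter t (step x) c) = qRead (insubd sr (tr (ssval sr) b).1) /\
            ihead (iter t (step x) c) = move_in (size x) MR (ihead c) /\
            out (iter t (step x) c) = out c ++ drop j (tr (ssval sr) b).2.
Proof.
elim: k => [|k IH] sr b j c Hst Hk.
  have [Hs Hi Ho] := step_st (c:=c) ltac:(by rewrite Hst).
  rewrite Hst /= in Hs Hi Ho.
  have Hj : j < size (tr (ssval sr) b).2 = false
    by apply/negbTE; rewrite -leqNgt -subn_eq0 Hk.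
  rewrite Hj in Hs Hi Ho.
  exists 1; split => //; split => //; rewrite Ho drop_oversize ?cats0 //.
  by rewrite leqNgt Hj.
have [Hs Hi Ho] := step_st (c:=c) ltac:(by rewrite Hst).
rewrite Hst /= in Hs Hi Ho.
have Hj : j < size (tr (ssval sr) b).2 by rewrite -subn_gt0 Hk.
rewrite Hj in Hs Hi Ho.
have Hj1 : j.+1 < KK.+1 by rewrite ltnS (leq_trans Hj) // KK_tr.
have [t [Ht1 [Ht2 Ht3]]] := IH sr b (inord j.+1) (step x c) Hs
   ltac:(by rewrite inordK // subnS Hk).
exists t.+1; rewrite !iterSr; split => //; split; first by rewrite Ht2 Hi.
by rewrite Ht3 Ho inordK // (drop_nth false Hj) cat_rcons.
Qed.

Lemma read_lem y : forall (sr : SR) i (c : config MM),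
  st c = qRead sr -> ihead c = i -> 0 < i -> i <= (size x).+1 -> drop i.-1 x = y ->
  exists t, st (iter t (step x) c) = qDone /\
            out (iter t (step x) c) = out c ++ RunG (ssval sr) y.
Proof.
elim: y => [|b y IH] sr i c Hst Hi Hi0 Hin Hd.
  have Hx : size x <= i.-1.
    by move/(congr1 size): Hd; rewrite size_drop /= => /eqP; rewrite subn_eq0.
  have Hri : read_input x i = None.
    by rewrite /read_input Hi0 /= leqNgt -(ltn_predK Hi0) ltnS Hx.
  have [Hs _ Ho] := step_st (c:=c) ltac:(by rewrite Hst).
  rewrite Hst Hi Hri /= in Hs Ho.
  have [t [Ht1 Ht2]] := @fin_lem _ sr ord0 (step x c) Hs (erefl _).
  exists t.+1; rewrite iterSr; split => //.
  by rewrite Ht2 Ho drop0.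
have Hx : i.-1 < size x.
  by rewrite ltnNge; apply/negP => H; move: Hd; rewrite drop_oversize.
have Hri : read_input x i = Some b.
  rewrite /read_input Hi0 /=.
  have -> : i <= size x by rewrite -(ltn_predK Hi0).
  by rewrite (drop_nth false Hx) in Hd; case: Hd => ->.
have [Hs Hi' Ho] := step_st (c:=c) ltac:(by rewrite Hst).
rewrite Hst Hi Hri /= in Hs Hi' Ho.
have [t [Ht1 [Ht2 Ht3]]] := @emit_lem _ sr b ord0 (step x c) Hs (erefl _).
have Hmem : (tr (ssval sr) b).1 \in reach by apply: Hcl; exact: (ssvalP sr).
have Hin' : i <= size x by rewrite -(ltn_predK Hi0).
have Hih : ihead (iter t (step x) (step x c)) = i.+1.
  by rewrite Ht2 Hi' /=; apply/minn_idPl.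
have Hd' : drop i.+1.-1 x = y.
  by move: Hd; rewrite /= (drop_nth false Hx) -(ltn_predK Hi0) /=; case.
have [t' [Ht1' Ht2']] := IH _ i.+1 _ Ht1 Hih (ltn0Sn _) Hin' Hd'.
exists (t' + t).+1; rewrite iterSr iterD; split => //.
by rewrite Ht2' Ht3 Ho drop0 insubdK //= catA.
Qed.

Lemma gen_correct : exists t, @halting MM (st (run MM x t)) /\
   out (run MM x t) = RunG s0 x /\
   forall s, s <= t -> whead (run MM x s) <= 1 * trunc_log 2 (size x).+2 + 1.
Proof.
pose c1 := step x (init_config MM).
have Hs1 : st c1 = qRead sr0 by [].
have Hi1 : ihead c1 = 1 by rewrite /c1 /step /= /minn; case: (size x).
have [t [Ht1 Ht2]] := @read_lem x sr0 1 c1 Hs1 Hi1 (ltnSn _) (ltn0Sn _) (drop0 _).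
exists t.+1; rewrite /run iterSr; split; first by rewrite /= Ht1.
split; first by rewrite Ht2.
by move=> s _; rewrite -/(run MM x s) run_whead.
Qed.

End Gen.

Lemma gen_logspace (R : choiceType) (s0 : R) tr fin (reach : seq R)
  (H0 : s0 \in reach) (Hcl : forall r b, r \in reach -> (tr r b).1 \in reach) :
  logspace_computable (RunG tr fin s0).
Proof.
exists (MM tr fin H0), 1 => x; exact: (gen_correct fin H0 Hcl x).
Qed.

Definition tok2n (t : token) : nat :=
  match t with T0 => 0 | T1 => 1 | Tx => 2 | Tf => 3 | Tlp => 4 | Trp => 5 | Tcomma => 6 | Thash => 7 end.
Definition n2tok (n : nat) : token :=
  match n with 0 => T0 | 1 => T1 | 2 => Tx | 3 => Tf | 4 => Tlp | 5 => Trp | 6 => Tcomma | _ => Thash end.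
Lemma tokK : cancel tok2n n2tok. Proof. by case. Qed.
HB.instance Definition _ := Countable.copy token (can_type tokK).

Definition nd (t : token) : bool := match t with Tf | Tlp => false | _ => true end.
Definition nf (t : token) : bool := match t with Tf => false | _ => true end.

Fixpoint allseqs (T : Type) (univ : seq T) (n : nat) : seq (seq T) :=
  match n with
  | 0 => [:: [::]]
  | n'.+1 => [::] :: [seq x :: s | x <- univ, s <- allseqs univ n']
  end.

Lemma mem_allseqs (T : eqType) (univ : seq T) n s : (forall x, x \in univ) ->
  (s \in allseqs univ n) = (size s <= n).
Proof.
move=> Hu; elim: n s => [|n IH] [|x s] //=.
rewrite in_cons /= ltnS -IH; apply/allpairsP/idP.
  by case=> [[y t] /= [_ Ht [_ ->]]].
by move=> H; exists (x, s).
Qed.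

Definition toks := [:: T0; T1; Tx; Tf; Tlp; Trp; Tcomma; Thash].
Lemma toks_all t : t \in toks. Proof. by case: t. Qed.
Lemma bools_all b : b \in [:: true; false]. Proof. by case: b. Qed.

Section TokT.
Variable L : nat.
Variable rw : seq token -> seq token.
Hypothesis L0 : 0 < L.
Hypothesis Hrw : forall u, all nd u -> (size u).+1 <= L ->
  exists u', [/\ rw (Tf :: u ++ [:: Tlp]) = Tf :: u' ++ [:: Tlp], all nd u',
    size u' = size u & rw (Tf :: u' ++ [:: Tlp]) = Tf :: u ++ [:: Tlp]].

Definition ttr (s : option (seq token)) (t : token) : option (seq token) * seq token :=
  match s with
  | None => match t with Tf => (Some [:: Tf], [::]) | _ => (None, [:: t]) end
  | Some buf => match t with
     | Tlp => (None, rw (rcons buf Tlp))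
     | Tf => (Some [:: Tf], buf)
     | _ => if size buf < L then (Some (rcons buf t), [::]) else (None, rcons buf t)
     end
  end.

Definition tfin (s : option (seq token)) : seq token := if s is Some buf then buf else [::].

Fixpoint TRun (s : option (seq token)) (ts : seq token) : seq token :=
  match ts with
  | [::] => tfin s
  | t :: ts' => (ttr s t).2 ++ TRun (ttr s t).1 ts'
  end.

Lemma TRun_cons s t ts : TRun s (t :: ts) = (ttr s t).2 ++ TRun (ttr s t).1 ts.
Proof. by []. Qed.

Lemma ttr_nd buf t : nd t -> ttr (Some buf) t =
  if size buf < L then (Some (rcons buf t), [::]) else (None, rcons buf t).
Proof. by case: t. Qed.

Definition TT ts := TRun None ts.

Lemma T_cons t r : nf t -> TT (t :: r) = t :: TT r.
Proof. by case: t. Qed.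

Lemma T_nf u r : all nf u -> TT (u ++ r) = u ++ TT r.
Proof. elim: u => //= t u IH /andP[Ht Hu]; by rewrite -/(TT _) T_cons // IH. Qed.

Lemma nd_nf u : all nd u -> all nf u.
Proof. by apply: sub_all; case. Qed.

Lemma coll_u u buf rest : all nd u -> size buf <= L ->
  TRun (Some buf) (u ++ rest) =
  if size buf + size u <= L then TRun (Some (buf ++ u)) rest else buf ++ u ++ TT rest.
Proof.
elim: u buf => [|t u IH] buf; first by rewrite addn0 cats0 => _ ->.
move=> /andP[Ht Hu] Hb.
rewrite cat_cons TRun_cons ttr_nd //.
case: ltnP => HL.
  by rewrite /= IH ?size_rcons // addSnnS !cat_rcons.
have HbL : size buf = L by apply/eqP; rewrite eqn_leq Hb HL.
rewrite HbL addnS ltnNge leq_addr /= -/(TT _) T_nf ?nd_nf //.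
by rewrite cat_rcons.
Qed.

Lemma T_seg u r : all nd u -> TT (Tf :: u ++ Tlp :: r) =
  (if (size u).+1 <= L then rw (Tf :: u ++ [:: Tlp]) else Tf :: u ++ [:: Tlp]) ++ TT r.
Proof.
move=> Hu; rewrite /TT /= coll_u //= add1n.
case: ifP => _ //=; first by rewrite -cats1.
by rewrite -/(TT _) T_cons // -catA.
Qed.

Lemma T_segf u r : all nd u -> TT (Tf :: u ++ Tf :: r) = Tf :: u ++ TT (Tf :: r).
Proof.
move=> Hu; rewrite /TT /= coll_u //= add1n.
by case: ifP => _ //=.
Qed.

Lemma T_segn u : all nd u -> TT (Tf :: u) = Tf :: u.
Proof.
move=> Hu; rewrite /TT /= -[u]cats0 coll_u //= add1n.
by case: ifP => _ //=; rewrite !cats0.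
Qed.

Lemma decomp r : exists u rest, [/\ r = u ++ rest, all nd u &
   (rest = [::] \/ exists r', rest = Tf :: r' \/ rest = Tlp :: r')].
Proof.
elim: r => [|t r [u [rest [-> Hu Hr]]]]; first by exists [::], [::]; split => //; left.
case Ht: (nd t).
  by exists (t :: u), rest; split => //=; rewrite Ht.
exists [::], (t :: u ++ rest); split => //; right; exists (u ++ rest).
by case: t Ht => //; [left|right].
Qed.

Lemma T_head r : exists r', TT (Tf :: r) = Tf :: r'.
Proof.
have [u [rest [-> Hu [->|[r' [->|->]]]]]] := decomp r.
- by rewrite cats0 T_segn //; eexists.
- by rewrite T_segf //; eexists.
rewrite T_seg //; case: ifP => Hs; last by eexists.
have [u' [-> _ _ _]] := Hrw Hu Hs; by eexists.
Qed.

Lemma TTK ts : TT (TT ts) = ts.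
Proof.
move: {2}(size ts) (leqnn (size ts)) => n; elim: n ts => [|n IH] [|t r] //= Hn.
case Ht: (nf t).
  by rewrite T_cons // T_cons // IH.
case: t Ht => // _.
move: Hn; have [u [rest [-> Hu Hrest]]] := decomp r.
rewrite size_cat ltnS.
case: Hrest => [->|[r' [->|->]]] Hn.
- by rewrite cats0 !T_segn.
- have [r'' Hr''] := T_head r'.
  rewrite T_segf // Hr'' T_segf // -Hr'' IH //.
  by move: Hn; rewrite /=; lia.
rewrite T_seg //; case: ifP => Hs.
  have [u' [-> Hu' Hsz Hback]] := Hrw Hu Hs.
  rewrite -cat_cons -catA /= T_seg // Hsz Hs Hback -cat_cons -catA /= IH //.
  by move: Hn; rewrite /=; lia.
rewrite -cat_cons -catA /= T_seg // Hs -cat_cons -catA /= IH //.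
by move: Hn; rewrite /=; lia.
Qed.



Definition tok_of (s : seq bool) : token :=
  match s with
  | [:: a; b; c] =>
    match a, b, c with
    | false, false, false => T0 | false, false, true => T1
    | false, true, false => Tx | false, true, true => Tf
    | true, false, false => Tlp | true, false, true => Trp
    | true, true, false => Tcomma | true, true, true => Thash
    end
  | _ => T0
  end.

Definition BS := (seq bool * option (seq token))%type.

Definition btr (ps : BS) (b : bool) : BS * seq bool :=
  let: (p, s) := ps in
  if size p == 2 then (([::], (ttr s (tok_of (rcons p b))).1), to_bits (ttr s (tok_of (rcons p b))).2)
  else ((rcons p b, s), [::]).

Definition bfin (ps : BS) : seq bool := to_bits (tfin ps.2) ++ ps.1.

Definition Tb := RunG btr bfin ([::], None).

Lemma to_bits_cat a b : to_bits (a ++ b) = to_bits a ++ to_bits b.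
Proof. by rewrite /to_bits map_cat flatten_cat. Qed.

Lemma run_tok s t y : RunG btr bfin ([::], s) (tok_bits t ++ y) =
  to_bits (ttr s t).2 ++ RunG btr bfin ([::], (ttr s t).1) y.
Proof. by case: t. Qed.

Lemma run_bits ts s r : size r < 3 ->
  RunG btr bfin ([::], s) (to_bits ts ++ r) = to_bits (TRun s ts) ++ r.
Proof.
move=> Hr; elim: ts s => [|t ts IH] s.
  case: r Hr => [|a [|b [|c r]]] //= _; by rewrite /bfin /= ?cats0.
by rewrite /to_bits /= -catA -/(to_bits _) run_tok IH -/(to_bits _) to_bits_cat catA.
Qed.

Lemma bits_decomp x : exists ts r, x = to_bits ts ++ r /\ size r < 3.
Proof.
move: {2}(size x) (leqnn (size x)) => n; elim: n x => [|n IH] x Hx.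
  by exists [::], x; move: Hx; case: x.
case: x Hx => [|a [|b [|c x]]] Hx; try by exists [::], [:: a; b] || exists [::], [:: a] || exists [::], [::].
have [ts [r [-> Hr]]] := IH x ltac:(by move: Hx => /=; lia).
exists (tok_of [:: a; b; c] :: ts), r; split => //.
by clear Hx; rewrite /to_bits /= -/(to_bits ts); case: a; case: b; case: c.
Qed.

Lemma Tb_tok ts r : size r < 3 -> Tb (to_bits ts ++ r) = to_bits (TT ts) ++ r.
Proof. exact: run_bits. Qed.

Lemma TbK x : Tb (Tb x) = x.
Proof.
have [ts [r [-> Hr]]] := bits_decomp x.
by rewrite !Tb_tok // TTK.
Qed.


Definition reachB (L : nat) : seq BS :=
  [seq (p, s) | p <- allseqs [:: true; false] 2, s <- None :: map Some (allseqs toks L)].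

Lemma mem_reachB ps : (ps \in reachB L) =
  (size ps.1 <= 2) && (if ps.2 is Some buf then size buf <= L else true).
Proof.
case: ps => p s; apply/allpairsP/idP.
  case=> [[p2 s2] [Hp Hs [-> ->]]].
  rewrite mem_allseqs in Hp; last exact: bools_all.
  rewrite /= Hp /=; move: Hs; rewrite /= in_cons => /orP[/eqP -> //|/mapP[b Hb ->]].
  by rewrite mem_allseqs in Hb; last exact: toks_all.
move=> /andP[Hp Hs]; exists (p, s); split => //; first by rewrite mem_allseqs //; exact: bools_all.
move: Hs Hp => /=; case: s => [buf|] Hs _; rewrite in_cons //=; apply/map_f.
by rewrite mem_allseqs //; exact: toks_all.
Qed.

Lemma Tb_logspace : logspace_computable Tb.
Proof.
apply: (@gen_logspace _ _ _ _ (reachB L)); first by rewrite mem_reachB.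
move=> [p s] b; rewrite !mem_reachB /= => /andP[Hp Hs].
rewrite /btr; case: eqP => Hp2 /=.
  case: s Hs => [buf|] Hs; case: (tok_of _) => //=.
  all: try case: ifP => //=.
  all: rewrite ?size_rcons //.
by rewrite Hs andbT ltn_neqAle Hp andbT; apply/eqP.
Qed.

End TokT.

Lemma nd_bits l : all nd (map bit_tok l).
Proof. by elim: l => //= -[] l ->. Qed.

Lemma nd_bin n : all nd (bin n).
Proof. by rewrite /bin; case: eqP => // _; apply: nd_bits. Qed.

Lemma nd_enc_fun g : all nd (enc_fun g).
Proof. by rewrite /enc_fun all_cat nd_bin /= nd_bits. Qed.

Lemma size_enc_dual g : size (enc_fun (dual g)) = size (enc_fun g).
Proof. by case: g => n f; rewrite /enc_fun /= !size_cat /= !size_map. Qed.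

Lemma dualK : involutive dual.
Proof.
case=> n f; rewrite /dual /=; congr existT; apply/ffunP => t; rewrite !ffunE negbK.
congr (f _); apply: val_inj => /=; by rewrite -map_comp (eq_map negbK) map_id.
Qed.

Lemma dualsetK : involutive dualset.
Proof. by move=> B; rewrite /dualset -map_comp (eq_map dualK) map_id. Qed.

Definition binval (ts : seq token) : nat := foldl (fun acc t => acc.*2 + (t == T1)) 0 ts.

Lemma binrevK fuel n : n <= fuel -> foldr (fun (b : bool) acc => acc.*2 + b) 0 (binrev fuel n) = n.
Proof.
elim: fuel n => [|f IH] [|n] //= Hn.
rewrite IH; first by rewrite uphalfK; case: (odd n) => /=; lia.
by rewrite leq_uphalf_double; move: Hn; lia.
Qed.

Lemma binvalK n : binval (bin n) = n.
Proof.
rewrite /bin; case: eqP => [->//|/eqP Hn].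
rewrite /binval map_rev foldl_rev.
have -> : forall l, foldr (fun x z => z.*2 + (x == T1)) 0 (map bit_tok l) =
                    foldr (fun (b : bool) acc => acc.*2 + b) 0 l.
  by elim=> //= -[] l ->.
exact: binrevK.
Qed.

Lemma bin_inj : injective bin.
Proof. by move=> m n H; rewrite -(binvalK m) H binvalK. Qed.

Lemma bit_tok_inj : injective bit_tok.
Proof. by case=> -[]. Qed.

Lemma split_hash (a a' b b' : seq token) : Thash \notin a -> Thash \notin a' ->
  a ++ Thash :: b = a' ++ Thash :: b' -> a = a' /\ b = b'.
Proof.
elim: a a' => [|x a IH] [|y a'] //=.
- by move=> _ _ [->].
- by move=> _; rewrite in_cons => /norP[/eqP H _] [/H].
- by rewrite in_cons => /norP[/eqP H _] _ [/esym/H].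
rewrite !in_cons => /norP[_ Ha] /norP[_ Ha'] [-> H].
by have [-> ->] := IH _ Ha Ha' H.
Qed.

Lemma hash_bin n : Thash \notin bin n.
Proof.
apply/negP; rewrite /bin; case: eqP => _ //; move/mapP => [b _]; by case: b.
Qed.

Lemma enc_fun_inj : injective enc_fun.
Proof.
case=> n f [n' f']; rewrite /enc_fun /= => H.
have [Hb Ht] := split_hash (hash_bin _) (hash_bin _) H.
have Hn := bin_inj Hb; subst n'.
have Hg : fgraph f = fgraph f' by apply: val_inj; exact: (inj_map bit_tok_inj Ht).
by rewrite -(fgraphK f) Hg fgraphK.
Qed.

Lemma bapp_dual f vs : size vs = arity f -> bapp (dual f) vs = ~~ bapp f (map negb vs).
Proof.
case: f => n g /= Hv; rewrite /bapp /=.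
have Hv1 : size vs == n by rewrite Hv.
have Hv2 : size (map negb vs) == n by rewrite size_map Hv.
case: insubP => [t _ Ht|]; last by rewrite Hv1.
case: insubP => [t' _ Ht'|]; last by rewrite Hv2.
rewrite ffunE; congr (~~ g _); apply: val_inj; by rewrite /= Ht Ht'.
Qed.

Fixpoint fall (P : form -> Prop) (l : seq form) : Prop :=
  match l with [::] => True | p :: l' => P p /\ fall P l' end.

Definition form_ind2 (P : form -> Prop) (HV : forall i, P (Var i))
  (HA : forall f args, fall P args -> P (App f args)) : forall phi, P phi :=
  fix F phi := match phi with
  | Var i => HV i
  | App f args => HA f args ((fix G l : fall P l :=
        match l with [::] => I | p :: l' => conj (F p) (G l') end) args)
  end.

Fixpoint dualF (phi : form) : form :=
  match phi with Var i => Var i | App f args => App (dual f) (map dualF args) end.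

Fixpoint wfF (phi : form) : bool :=
  match phi with Var _ => true | App f args => (size args == arity f) && all wfF args end.

Lemma fall_map (P : form -> Prop) (g h : form -> nat) l :
  fall (fun p => g p = h p) l -> map g l = map h l.
Proof. by elim: l => //= p l IH [-> /IH ->]. Qed.

Lemma Bform_wf B phi : is_Bformula B phi -> wfF phi.
Proof.
elim/form_ind2: phi => //= f args IH /and3P[_ -> Ha] /=.
by elim: args IH Ha => //= p l IHl [Hp Hl] /andP[/Hp -> /(IHl Hl)].
Qed.

Lemma Bform_sub B B' phi : {subset B <= B'} -> is_Bformula B phi -> is_Bformula B' phi.
Proof.
move=> HB; elim/form_ind2: phi => //= f args IH /and3P[/HB -> -> Ha] /=.
by elim: args IH Ha => //= p l IHl [Hp Hl] /andP[/Hp -> /(IHl Hl)].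
Qed.

Lemma Bform_dual B phi : is_Bformula B phi -> is_Bformula (dualset B) (dualF phi).
Proof.
elim/form_ind2: phi => //= f args IH /and3P[Hf Hs Ha] /=.
rewrite /dualset (map_f dual Hf) size_map Hs /= all_map.
by elim: args IH Ha {Hs} => //= p l IHl [Hp Hl] /andP[/Hp -> /(IHl Hl)].
Qed.

Lemma dualFK phi : dualF (dualF phi) = phi.
Proof.
elim/form_ind2: phi => //= f args IH; rewrite dualK -map_comp.
by congr App; elim: args IH => //= p l IHl [-> /IHl ->].
Qed.

Lemma fsize_dual Y phi : fsize Y (dualF phi) = fsize Y phi.
Proof.
case: Y => /=; elim/form_ind2: phi => //= f args IH; rewrite -map_comp;
  by elim: args IH => //= p l IHl [-> /IHl [->]].
Qed.

Lemma feval_dual a phi : wfF phi -> feval a (dualF phi) = ~~ feval (negb \o a) phi.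
Proof.
elim/form_ind2: phi => /=; first by move=> i; rewrite negbK.
move=> f args IH /andP[/eqP Hs Ha].
rewrite -map_comp bapp_dual; last by rewrite size_map.
congr (~~ bapp _ _); rewrite -map_comp.
by elim: args IH Ha {Hs} => //= p l IHl [Hp Hl] /andP[/Hp -> /(IHl Hl) ->] /=; rewrite negbK.
Qed.

Lemma fequiv_dual psi phi : wfF psi -> wfF phi -> fequiv psi phi -> fequiv (dualF psi) (dualF phi).
Proof. by move=> H1 H2 H a; rewrite !feval_dual // H. Qed.

Definition dualG (g : gate) : gate :=
  match g with In j => In j | Gt f ins => Gt (dual f) ins end.
Definition dualC (c : circuit) : circuit := map dualG c.

Definition gate_wf (i : nat) (g : gate) : bool :=
  if g is Gt f ins then (size ins == arity f) && all (fun j => j < i) ins else true.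

Definition cv a vs (c : circuit) := foldl (fun vs g => rcons vs (gate_val a vs g)) vs c.

Lemma size_cv a vs c : size (cv a vs c) = size vs + size c.
Proof. by elim: c vs => [|g c IH] vs /=; rewrite ?addn0 // IH size_rcons addSnnS. Qed.

Lemma gate_dual a vs g : gate_wf (size vs) g ->
  gate_val a (map negb vs) (dualG g) = ~~ gate_val (negb \o a) vs g.
Proof.
case: g => [j|f ins] /=; first by rewrite negbK.
move=> /andP[/eqP Hs Hall]; rewrite bapp_dual; last by rewrite size_map.
congr (~~ bapp _ _); rewrite -map_comp; apply/eq_in_map => j Hj /=.
rewrite (nth_map false) ?negbK //; exact: (allP Hall).
Qed.

Lemma cv_dual a c vs : (forall k, k < size c -> gate_wf (size vs + k) (nth (In 0) c k)) ->
  cv a (map negb vs) (dualC c) = map negb (cv (negb \o a) vs c).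
Proof.
elim: c vs => [|g c IH] vs //= H.
have Hg := H 0 (ltn0Sn _); rewrite addn0 in Hg.
rewrite gate_dual // -map_rcons IH // => k Hk.
by rewrite size_rcons addSnnS; exact: (H k.+1).
Qed.

Lemma Bcirc_wf B c : is_Bcircuit B c ->
  forall k, k < size c -> gate_wf k (nth (In 0) c k).
Proof.
move=> /andP[_ /allP H] k Hk; have := H k; rewrite mem_iota /= add0n => /(_ Hk).
by case: (nth _ c k) => //= f ins /and3P[_ -> ->].
Qed.

Lemma ceval_dual B a c : is_Bcircuit B c -> ceval a (dualC c) = ~~ ceval (negb \o a) c.
Proof.
move=> H; change (last false (cv a [::] (dualC c)) = ~~ last false (cv (negb \o a) [::] c)).
have := @cv_dual a c [::] (Bcirc_wf H); rewrite /= => ->.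
have : 0 < size (cv (negb \o a) [::] c) by rewrite size_cv; case/andP: H.
by case: (cv _ _ _) => //= x s _; rewrite (last_map negb).
Qed.

Lemma Bcirc_dual B c : is_Bcircuit B c -> is_Bcircuit (dualset B) (dualC c).
Proof.
move=> /andP[Hs /allP H]; apply/andP; split; first by rewrite size_map.
apply/allP => i; rewrite size_map => Hi; have := H i Hi.
move: Hi; rewrite mem_iota add0n => /= Hi.
rewrite (nth_map (In 0)) //; case: (nth _ c i) => //= f ins /and3P[Hf -> ->].
by rewrite andbT /dualset (map_f dual Hf).
Qed.

Lemma dualCK c : dualC (dualC c) = c.
Proof.
rewrite /dualC -map_comp -{2}(map_id c); apply: eq_map => -[j|f ins] //=.
by rewrite dualK.
Qed.

Lemma csize_dual Y c : csize Y (dualC c) = csize Y c.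
Proof. by case: Y; rewrite /= /csize_l /csize_s count_map; apply: eq_count => -[]. Qed.

Lemma cequiv_dual B B' psi phi : is_Bcircuit B psi -> is_Bcircuit B' phi ->
  cequiv psi phi -> cequiv (dualC psi) (dualC phi).
Proof. by move=> H1 H2 H a; rewrite (ceval_dual _ H1) (ceval_dual _ H2) H. Qed.

Section Main.
Variable B : seq bfun.
Definition Bs := B ++ dualset B.
Definition g0 : bfun := existT (fun n => {ffun n.-tuple bool -> bool}) 0 [ffun _ => false].
Definition pat g := Tf :: enc_fun g ++ [:: Tlp].
Definition LB := (\max_(g <- Bs) size (enc_fun g)).+1.
Definition rwB (seg : seq token) : seq token :=
  let i := find (fun g => pat g == seg) Bs in
  if i < size Bs then pat (dual (nth g0 Bs i)) else seg.

Lemma LB0 : 0 < LB. Proof. by []. Qed.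

Lemma Bs_dual g : g \in Bs -> dual g \in Bs.
Proof.
rewrite /Bs !mem_cat => /orP[H|/mapP[h Hh ->]].
  by rewrite (map_f dual H) orbT.
by rewrite dualK Hh.
Qed.

Lemma pat_eq e e' : Tf :: e ++ [:: Tlp] = Tf :: e' ++ [:: Tlp] -> e = e'.
Proof. by case; rewrite !cats1 => /rcons_inj [->]. Qed.

Lemma pat_inj : injective pat.
Proof. by move=> g g' /pat_eq /enc_fun_inj. Qed.

Lemma rwB_pat g : g \in Bs -> rwB (pat g) = pat (dual g).
Proof.
move=> Hg; rewrite /rwB.
have Hh : has (fun h => pat h == pat g) Bs by apply/hasP; exists g.
rewrite -has_find Hh; have := nth_find g0 Hh => /eqP /pat_inj -> //.
Qed.

Lemma Hrw u : all nd u -> (size u).+1 <= LB ->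
  exists u', [/\ rwB (Tf :: u ++ [:: Tlp]) = Tf :: u' ++ [:: Tlp], all nd u',
    size u' = size u & rwB (Tf :: u' ++ [:: Tlp]) = Tf :: u ++ [:: Tlp]].
Proof.
move=> Hu _.
case: (boolP (has (fun g => pat g == Tf :: u ++ [:: Tlp]) Bs)) => [/hasP[g Hg /eqP Hp]|Hn].
  have He : enc_fun g = u by apply: pat_eq.
  exists (enc_fun (dual g)); split.
  - by rewrite -Hp rwB_pat.
  - exact: nd_enc_fun.
  - by rewrite size_enc_dual He.
  by rewrite -/(pat (dual g)) rwB_pat ?Bs_dual // dualK Hp.
exists u; split => //; by rewrite /rwB -has_find (negbTE Hn).
Qed.

Definition TTB := TT LB rwB.
Definition TbB := Tb LB rwB.

Lemma TT_nf_all u : all nf u -> TTB u = u.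
Proof. by move=> H; rewrite -[u]cats0 /TTB T_nf. Qed.

Lemma enc_fits f : f \in Bs -> size (enc_fun f) < LB.
Proof. by move=> Hf; rewrite ltnS; apply: (leq_bigmax_seq _ Hf). Qed.

Lemma TT_fun f r : f \in Bs -> TTB (Tf :: enc_fun f ++ Tlp :: r) = pat (dual f) ++ TTB r.
Proof.
by move=> Hf; rewrite /TTB (T_seg _ LB0 _ (nd_enc_fun f)) enc_fits // -/(pat f) rwB_pat.
Qed.

Lemma TT_form phi r : is_Bformula Bs phi -> TTB (enc_form phi ++ r) = enc_form (dualF phi) ++ TTB r.
Proof.
elim/form_ind2: phi r => [i|f args IH] r /=.
  by move=> _; rewrite /TTB (T_nf _ _ (u := Tx :: bin i)) //= nd_nf ?nd_bin.
move=> /and3P[Hf _ Ha].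
rewrite -catA /= -catA /= TT_fun //.
have Hsep : forall r', TTB (sep_by (map enc_form args) ++ r') =
    sep_by (map enc_form (map dualF args)) ++ TTB r'.
  elim: args IH Ha {Hf} => //= p l IHl [Hp Hl] /andP[Hpb Hlb] r'.
  case: l IHl Hl Hlb => [|q l'] IHl Hl Hlb; first by rewrite /= Hp.
  rewrite /= -catA Hp // /TTB T_cons // -/TTB.
  by have := IHl Hl Hlb r' => /= ->; rewrite -catA.
by rewrite Hsep /TTB T_cons // -/TTB /pat /= -!catA /= -!catA.
Qed.

Definition gok (B' : seq bfun) (g : gate) : bool := if g is Gt f _ then f \in B' else true.

Lemma Bcirc_gok B' c : is_Bcircuit B' c -> all (gok B') c.
Proof.
move=> /andP[_ /allP H]; apply/(all_nthP (In 0)) => i Hi.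
have := H i; rewrite mem_iota add0n Hi => /(_ isT).
by case: (nth _ c i) => //= f ins /and3P[].
Qed.

Lemma sep_nf s : all (all nf) s -> all nf (sep_by s).
Proof.
elim: s => //= x [|y s] IH /andP[Hx Hs] //.
by rewrite all_cat Hx /= IH.
Qed.

Lemma nf_bin n : all nf (bin n). Proof. exact: nd_nf (nd_bin n). Qed.

Lemma TT_circ c r : all (gok Bs) c -> TTB (enc_circuit c ++ r) = enc_circuit (dualC c) ++ TTB r.
Proof.
elim: c r => [|g c IH] r //= /andP[Hg Hc].
rewrite /enc_circuit /= -/(enc_circuit c) -/(enc_circuit (dualC c)) -!catA -IH //.
case: g Hg => [j|f ins] /= Hg.
  by rewrite /TTB (T_nf _ _ (u := Tx :: bin j)) //= nf_bin.
rewrite -catA /= TT_fun //.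
have Hs : all nf (sep_by [seq bin i | i <- ins] ++ [:: Trp]).
  rewrite all_cat sep_nf ?andbT //; apply/allP => ? /mapP[i _ ->]; exact: nf_bin.
by rewrite /TTB /= T_nf // -?catA /= -?catA /=.
Qed.

Lemma TbB_enc ts : TbB (to_bits ts) = to_bits (TTB ts).
Proof. by have := Tb_tok LB rwB ts (r := [::]) isT; rewrite !cats0. Qed.

Lemma TbBK x : TbB (TbB x) = x.
Proof. exact: (TbK LB0 Hrw). Qed.

Lemma TT_tail k : TTB (Thash :: bin k) = Thash :: bin k.
Proof. by rewrite TT_nf_all //= nf_bin. Qed.

Lemma subB : {subset B <= Bs}.
Proof. by move=> g Hg; rewrite mem_cat Hg. Qed.
Lemma subBd : {subset dualset B <= Bs}.
Proof. by move=> g Hg; rewrite mem_cat Hg orbT. Qed.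

Lemma MEE_red X Y x : MEE X Y B x <-> MEE X Y (dualset B) (TbB x).
Proof.
case: X => /=; split.
- move=> [phi [k [-> [Hphi [psi [Hpsi [Hs He]]]]]]].
  exists (dualF phi), k; split.
    by rewrite TbB_enc TT_form ?(Bform_sub subB) // TT_tail.
  split; first exact: Bform_dual.
  exists (dualF psi); split; first exact: Bform_dual.
  split; first by rewrite fsize_dual.
  by apply: fequiv_dual => //; apply: Bform_wf; eauto.
- move=> [phi [k [Hx [Hphi [psi [Hpsi [Hs He]]]]]]].
  exists (dualF phi), k; split.
    by rewrite -(TbBK x) Hx TbB_enc TT_form ?(Bform_sub subBd) // TT_tail.
  split; first by rewrite -(dualsetK B); exact: Bform_dual.
  exists (dualF psi); split; first by rewrite -(dualsetK B); exact: Bform_dual.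
  split; first by rewrite fsize_dual.
  by apply: fequiv_dual => //; apply: Bform_wf; eauto.
- move=> [phi [k [-> [Hphi [psi [Hpsi [Hs He]]]]]]].
  exists (dualC phi), k; split.
    rewrite TbB_enc TT_circ ?TT_tail //.
    by have := Bcirc_gok Hphi; apply: sub_all => -[//|f ins] /=; apply: subB.
  split; first exact: Bcirc_dual.
  exists (dualC psi); split; first exact: Bcirc_dual.
  split; first by rewrite csize_dual.
  exact: cequiv_dual Hpsi Hphi He.
- move=> [phi [k [Hx [Hphi [psi [Hpsi [Hs He]]]]]]].
  exists (dualC phi), k; split.
    rewrite -(TbBK x) Hx TbB_enc TT_circ ?TT_tail //.
    by have := Bcirc_gok Hphi; apply: sub_all => -[//|f ins] /=; apply: subBd.
  split; first by rewrite -(dualsetK B); exact: Bcirc_dual.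
  exists (dualC psi); split; first by rewrite -(dualsetK B); exact: Bcirc_dual.
  split; first by rewrite csize_dual.
  exact: cequiv_dual Hpsi Hphi He.
Qed.

Lemma red_dual X Y : logspace_reducible (MEE X Y B) (MEE X Y (dualset B)).
Proof. exists TbB; split; [exact: Tb_logspace LB0 | exact: MEE_red]. Qed.

End Main.

Theorem mainTheorem3 (B : seq bfun) (X : kindX) (Y : kindY) :
  logspace_equiv (MEE X Y B) (MEE X Y (dualset B)).
Proof.
split; first exact: red_dual.
by have := red_dual (dualset B) X Y; rewrite dualsetK.
Qed.
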